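(* Let $u:[0,b)\to(0,\infty)$ be a solution of $\frac{u''}{1+(u')^2}=\frac{xu'}{2}-\frac u2+\frac{n-1}{u}$ with $u(0)<\sqrt{2(n-1)}$ and $u'(0)<0$. Then $u$ is strictly convex on $[0,b)$.
   Context: $n\ge2$ is a fixed integer. *)

(* Defs.v *)
From Stdlib Require Import Reals.
From Coquelicot Require Import Coquelicot.
Open Scope R_scope.

Definition in_Ico0 (b : Rbar) (x : R) : Prop := 0 <= x /\ Rbar_lt x b.

(* f' is the derivative of f on [0,b), relative to [0,b): at interior points
   this is the usual two-sided derivative, at x = 0 the right derivative. *)
Definition deriv_on_Ico0 (b : Rbar) (f f' : R -> R) : Prop :=
  forall x, in_Ico0 b x ->
    filterlim (fun y => (f y - f x) / (y - x))
      (within (fun y => in_Ico0 b y /\ y <> x) (locally x))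
      (locally (f' x)).

Definition strictly_convex_on (D : R -> Prop) (f : R -> R) : Prop :=
  forall x y t, D x -> D y -> x <> y -> 0 < t < 1 ->
    f (t * x + (1 - t) * y) < t * f x + (1 - t) * f y.

(* Main.v *)
Require Import Defs.
From Stdlib Require Import Reals Lra Classical.
From Coquelicot Require Import Coquelicot.
Open Scope R_scope.

Lemma ball_R (x e y : R) : ball x e y <-> Rabs (y - x) < e.
Proof. unfold ball; simpl; unfold AbsRing_ball, abs, minus, plus, opp; simpl. tauto. Qed.

Lemma rbar_nbhd (b : Rbar) (x : R) : Rbar_lt x b -> exists d, 0 < d /\ forall y, y < x + d -> Rbar_lt y b.
Proof.
  destruct b as [r| |]; simpl; intros H.
  - exists (r - x); split; [lra | intros; lra].
  - exists 1; split; [lra | auto].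
  - contradiction.
Qed.

Lemma deriv_ext (b : Rbar) (f f' : R -> R) (x : R) : deriv_on_Ico0 b f f' -> in_Ico0 b x ->
  forall eps, 0 < eps -> exists d, 0 < d /\ forall y, in_Ico0 b y -> y <> x -> Rabs (y - x) < d ->
   Rabs ((f y - f x) / (y - x) - f' x) < eps.
Proof.
  intros H Hx eps He.
  destruct (H x Hx (ball (f' x) (mkposreal eps He)) (locally_ball _ _)) as [d Hd].
  exists d; split; [apply cond_pos|].
  intros y Hy Hyx Hyd.
  assert (B : ball x d y) by (apply ball_R; exact Hyd).
  specialize (Hd y B (conj Hy Hyx)). apply ball_R in Hd. simpl in Hd. exact Hd.
Qed.

Lemma deriv_interior (b : Rbar) (f f' : R -> R) (x : R) : deriv_on_Ico0 b f f' -> 0 < x -> Rbar_lt x b ->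
  derivable_pt_lim f x (f' x).
Proof.
  intros H Hx Hxb eps He.
  destruct (rbar_nbhd b x Hxb) as [d1 [Hd1 Hb1]].
  destruct (deriv_ext b f f' x H (conj (Rlt_le _ _ Hx) Hxb) eps He) as [d [Hd Hdd]].
  assert (Hpos : 0 < Rmin d (Rmin d1 x)) by (repeat apply Rmin_pos; lra).
  exists (mkposreal _ Hpos). intros h Hh Hhd. simpl in Hhd.
  assert (h1 : Rabs h < d) by (eapply Rlt_le_trans; [exact Hhd| apply Rmin_l]).
  assert (h2 : Rabs h < d1) by (eapply Rlt_le_trans; [exact Hhd| eapply Rle_trans; [apply Rmin_r|apply Rmin_l]]).
  assert (h3 : Rabs h < x) by (eapply Rlt_le_trans; [exact Hhd| eapply Rle_trans; [apply Rmin_r|apply Rmin_r]]).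
  assert (hh : - Rabs h <= h <= Rabs h) by (split; [pose proof (Rabs_maj2 h); lra | apply RRle_abs]) .
  assert (Hy : in_Ico0 b (x + h)). { split. lra. apply Hb1. lra. }
  specialize (Hdd (x + h) Hy). replace (x + h - x) with h in Hdd by ring.
  apply Hdd; [intro; apply Hh; lra | exact h1].
Qed.

Lemma deriv_cont (b : Rbar) (f f' : R -> R) (x : R) : deriv_on_Ico0 b f f' -> in_Ico0 b x ->
  forall eps, 0 < eps -> exists d, 0 < d /\ forall y, in_Ico0 b y -> Rabs (y - x) < d ->
   Rabs (f y - f x) < eps.
Proof.
  intros H Hx eps He.
  destruct (deriv_ext b f f' x H Hx 1 Rlt_0_1) as [d1 [Hd1 Hdd]].
  set (K := Rabs (f' x) + 1).
  assert (HK : 0 < K) by (unfold K; pose proof (Rabs_pos (f' x)); lra).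
  assert (Hpos : 0 < Rmin d1 (eps / K)) by (apply Rmin_pos; [lra| apply Rdiv_lt_0_compat; lra]).
  exists (Rmin d1 (eps / K)); split; [exact Hpos|].
  intros y Hy Hyd.
  destruct (Req_dec y x) as [E|E].
  { subst. replace (f x - f x) with 0 by ring. rewrite Rabs_R0. lra. }
  assert (h1 : Rabs (y - x) < d1) by (eapply Rlt_le_trans; [exact Hyd| apply Rmin_l]).
  assert (h2 : Rabs (y - x) < eps / K) by (eapply Rlt_le_trans; [exact Hyd| apply Rmin_r]).
  specialize (Hdd y Hy E h1).
  set (q := (f y - f x) / (y - x)) in *.
  assert (Eq : f y - f x = q * (y - x)) by (unfold q; field; intro; apply E; lra).
  rewrite Eq, Rabs_mult.
  assert (Hq : Rabs q < K).
  { unfold K. replace q with ((q - f' x) + f' x) by ring.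
    pose proof (Rabs_triang (q - f' x) (f' x)). lra. }
  assert (Hyx : eps / K * K = eps) by (field; lra).
  pose proof (Rabs_pos (y - x)). pose proof (Rabs_pos q). nra.
Qed.

Definition clamp (a b0 s : R) := Rmin b0 (Rmax a s).

Lemma clamp_in a b0 s : a <= b0 -> a <= clamp a b0 s <= b0.
Proof. intros; unfold clamp, Rmin, Rmax; repeat destruct Rle_dec; lra. Qed.

Lemma clamp_id a b0 s : a <= s <= b0 -> clamp a b0 s = s.
Proof. intros; unfold clamp, Rmin, Rmax; repeat destruct Rle_dec; lra. Qed.

Lemma clamp_lip a b0 s t : a <= b0 -> Rabs (clamp a b0 s - clamp a b0 t) <= Rabs (s - t).
Proof. intros; unfold clamp, Rmin, Rmax; repeat destruct Rle_dec; unfold Rabs; repeat destruct Rcase_abs; lra. Qed.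

Lemma in_Ico_le (b : Rbar) b0 y : 0 <= y -> y <= b0 -> Rbar_lt b0 b -> in_Ico0 b y.
Proof. intros; split; [auto|]. destruct b; simpl in *; auto; lra. Qed.

Lemma cont_clamp (b : Rbar) f f' a b0 : deriv_on_Ico0 b f f' -> 0 <= a -> a <= b0 -> Rbar_lt b0 b ->
  forall x, continuity_pt (fun s => f (clamp a b0 s)) x.
Proof.
  intros H Ha Hab Hb x. unfold continuity_pt, continue_in, limit1_in, limit_in.
  intros eps He. simpl. unfold R_dist.
  pose proof (clamp_in a b0 x Hab).
  destruct (deriv_cont b f f' (clamp a b0 x) H (in_Ico_le b b0 (clamp a b0 x) ltac:(lra) ltac:(lra) Hb) eps He) as [d [Hd Hdd]].
  exists d; split; [exact Hd|]. intros s [_ Hs].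
  pose proof (clamp_in a b0 s Hab). pose proof (clamp_lip a b0 s x Hab).
  apply Hdd. apply (in_Ico_le b b0); [lra|lra|exact Hb]. lra.
Qed.

Lemma mvt_open (f f' : R -> R) a b0 : a < b0 ->
  (forall x, a < x < b0 -> derivable_pt_lim f x (f' x)) ->
  (forall x, continuity_pt (fun s => f (clamp a b0 s)) x) ->
  exists c, a < c < b0 /\ f b0 - f a = f' c * (b0 - a).
Proof.
  intros Hab Hd Hc.
  set (g := fun s => f (clamp a b0 s)).
  assert (Hg : forall c, a < c < b0 -> derivable_pt_lim g c (f' c)).
  { intros c Hc' eps He. destruct (Hd c Hc' eps He) as [d Hdd].
    assert (Hpos : 0 < Rmin d (Rmin (c - a) (b0 - c))) by (repeat apply Rmin_pos; try apply cond_pos; lra).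
    exists (mkposreal _ Hpos). intros h Hh Hhd. simpl in Hhd.
    assert (h1 : Rabs h < d) by (eapply Rlt_le_trans; [exact Hhd| apply Rmin_l]).
    assert (h2 : Rabs h < c - a) by (eapply Rlt_le_trans; [exact Hhd| eapply Rle_trans; [apply Rmin_r|apply Rmin_l]]).
    assert (h3 : Rabs h < b0 - c) by (eapply Rlt_le_trans; [exact Hhd| eapply Rle_trans; [apply Rmin_r|apply Rmin_r]]).
    assert (hh : - Rabs h <= h <= Rabs h) by (split; [pose proof (Rabs_maj2 h); lra | apply RRle_abs]).
    unfold g. rewrite (clamp_id a b0 (c + h)) by lra. rewrite (clamp_id a b0 c) by lra.
    apply Hdd; auto. }
  set (pr1 := fun c (P : a < c < b0) => exist (fun l => derivable_pt_abs g c l) (f' c) (Hg c P)).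
  set (pr2 := fun c (P : a < c < b0) => derivable_pt_id c).
  destruct (MVT g id a b0 pr1 pr2 Hab (fun c _ => Hc c) (fun c _ => derivable_continuous_pt _ _ (derivable_pt_id c))) as [c [P E]].
  exists c; split; [exact P|].
  unfold pr1, pr2 in E. rewrite derive_pt_id in E. simpl in E.
  unfold g, id in E. rewrite (clamp_id a b0 a), (clamp_id a b0 b0) in E by lra. lra.
Qed.

Lemma cont_on (g : R -> R) a y : a <= y -> (forall x, continuity_pt (fun s => g (clamp a y s)) x) ->
  forall x, a <= x <= y -> forall eps, 0 < eps -> exists d, 0 < d /\
   forall t, a <= t <= y -> Rabs (t - x) < d -> Rabs (g t - g x) < eps.
Proof.
  intros Hay Hc x Hx eps He.
  destruct (Hc x eps He) as [d [Hd Hdd]].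
  exists d; split; [exact Hd|]. intros t Ht Htd.
  destruct (Req_dec t x) as [E|E].
  { subst. replace (g x - g x) with 0 by ring. rewrite Rabs_R0. lra. }
  specialize (Hdd t). simpl in Hdd. unfold R_dist in Hdd.
  rewrite (clamp_id a y t), (clamp_id a y x) in Hdd by lra.
  apply Hdd. split; [split; [exact I| auto]| exact Htd].
Qed.

Lemma first_zero (g : R -> R) y : 0 < y -> g 0 < 0 -> 0 <= g y ->
  (forall x, continuity_pt (fun s => g (clamp 0 y s)) x) ->
  exists z, 0 < z <= y /\ g z = 0 /\ forall t, 0 <= t < z -> g t < 0.
Proof.
  intros Hy H0 Hgy Hc.
  pose proof (cont_on g 0 y (Rlt_le _ _ Hy) Hc) as C.
  set (E := fun t => 0 <= t <= y /\ forall s, 0 <= s <= t -> g s < 0).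
  assert (HE0 : E 0). { split; [lra|]. intros s Hs. replace s with 0 by lra. exact H0. }
  assert (Hb : bound E). { exists y. intros t [Ht _]. lra. }
  destruct (completeness E Hb (ex_intro _ 0 HE0)) as [z [Hub Hlub]].
  assert (Hz0 : 0 <= z) by (apply Hub; exact HE0).
  assert (Hzy : z <= y) by (apply Hlub; intros t [Ht _]; lra).
  assert (A : forall t, 0 <= t < z -> g t < 0).
  { intros t Ht. destruct (classic (exists e, E e /\ t < e)) as [[e [[He1 He2] He3]]|N].
    - apply He2; lra.
    - exfalso. assert (z <= t). { apply Hlub. intros e He. destruct (Rle_dec e t); auto.
        exfalso; apply N; exists e; split; auto; lra. } lra. }
  assert (Gz : g z = 0).
  { destruct (Rtotal_order (g z) 0) as [L|[Eq|L]]; auto; exfalso.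
    - destruct (Req_dec z y) as [Ez|Nz]. { subst z. lra. }
      destruct (C z (conj Hz0 Hzy) (- g z) ltac:(lra)) as [d [Hd Hdd]].
      set (t := Rmin (z + d/2) y).
      assert (Ht1 : z < t) by (unfold t, Rmin; destruct Rle_dec; lra).
      assert (Ht2 : t <= y) by (unfold t; apply Rmin_r).
      assert (Ht3 : t <= z + d/2) by (unfold t; apply Rmin_l).
      assert (Et : E t).
      { split; [lra|]. intros s Hs. destruct (Rlt_le_dec s z) as [Ls|Ls]. apply A; lra.
        assert (K : Rabs (s - z) < d) by (rewrite Rabs_right; lra).
        specialize (Hdd s ltac:(lra) K). pose proof (Rle_abs (g s - g z)). lra. }
      pose proof (Hub t Et). lra.
    - destruct (Req_dec z 0) as [Ez|Nz]. { rewrite Ez in L. lra. }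
      destruct (C z (conj Hz0 Hzy) (g z) L) as [d [Hd Hdd]].
      set (t := z - Rmin d z / 2).
      assert (Hm1 : 0 < Rmin d z) by (apply Rmin_pos; lra).
      assert (Hm2 : Rmin d z <= d) by apply Rmin_l.
      assert (Hm3 : Rmin d z <= z) by apply Rmin_r.
      assert (K : Rabs (t - z) < d) by (unfold t; rewrite Rabs_left; lra).
      specialize (Hdd t ltac:(unfold t; lra) K).
      pose proof (A t ltac:(unfold t; lra)).
      pose proof (Rabs_maj2 (g t - g z)). lra. }
  exists z. split; [|split; auto].
  split; [|exact Hzy]. destruct (Req_dec z 0) as [Ez|Nz]; [rewrite Ez in Gz; lra| lra].
Qed.

Lemma neg_deriv_left (g : R -> R) z l : 0 < z -> derivable_pt_lim g z l -> l < 0 ->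
  (forall t, 0 <= t < z -> g t < g z) -> False.
Proof.
  intros Hz Hd Hl Hlt.
  destruct (Hd (- l / 2) ltac:(lra)) as [d Hdd].
  set (h := - (Rmin d z / 2)).
  assert (Hm1 : 0 < Rmin d z) by (apply Rmin_pos; [apply cond_pos|lra]).
  assert (Hm2 : Rmin d z <= d) by apply Rmin_l.
  assert (Hm3 : Rmin d z <= z) by apply Rmin_r.
  specialize (Hdd h ltac:(unfold h; lra) ltac:(unfold h; rewrite Rabs_left; lra)).
  pose proof (Hlt (z + h) ltac:(unfold h; lra)).
  pose proof (Rle_abs ((g (z + h) - g z) / h - l)).
  assert (Q : (g (z + h) - g z) / h < l / 2) by lra.
  assert (Hh : h < 0) by (unfold h; lra).
  apply (Rmult_lt_compat_r (- h)) in Q; [|lra].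
  replace ((g (z + h) - g z) / h * - h) with (- (g (z + h) - g z)) in Q by (field; lra).
  nra.
Qed.

Lemma cp_plus f g x : continuity_pt f x -> continuity_pt g x -> continuity_pt (fun s => f s + g s) x.
Proof. exact (continuity_pt_plus f g x). Qed.
Lemma cp_minus f g x : continuity_pt f x -> continuity_pt g x -> continuity_pt (fun s => f s - g s) x.
Proof. exact (continuity_pt_minus f g x). Qed.
Lemma cp_mult f g x : continuity_pt f x -> continuity_pt g x -> continuity_pt (fun s => f s * g s) x.
Proof. exact (continuity_pt_mult f g x). Qed.
Lemma cp_cst k x : continuity_pt (fun _ => k) x.
Proof. apply continuity_pt_const. intros a b; reflexivity. Qed.
Lemma cp_pow2 f x : continuity_pt f x -> continuity_pt (fun s => f s ^ 2) x.
Proof. intros H. apply continuity_pt_ext with (f := fun s => f s * f s). intros; ring. apply cp_mult; auto. Qed.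
Lemma cp_div2 f x : continuity_pt f x -> continuity_pt (fun s => f s / 2) x.
Proof. intros H. apply continuity_pt_ext with (f := fun s => f s * (/ 2)). intros; unfold Rdiv; ring. apply cp_mult; auto. apply cp_cst. Qed.
Lemma cp_clamp a y x : a <= y -> continuity_pt (fun s => clamp a y s) x.
Proof.
  intros H eps He. exists eps; split; [exact He|]. intros s [_ Hs]. simpl in *. unfold R_dist in *.
  pose proof (clamp_lip a y s x H). lra.
Qed.

Lemma rbar_lt_le (b : Rbar) m y : m <= y -> Rbar_lt y b -> Rbar_lt m b.
Proof. destruct b; simpl; intros; auto; lra. Qed.

Definition Qf (u u1 : R -> R) x := u x ^ 2 - x * u x * u1 x.
Definition Wf c (u u1 : R -> R) x := u x * u1 x - x * u1 x ^ 2 - x * (1 + u1 x ^ 2) * (c - Qf u u1 x / 2).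

Ltac contt Hcu Hcu1 Hay := unfold Wf, Qf;
  repeat first [apply cp_minus | apply cp_plus | apply cp_pow2 | apply cp_div2 | apply cp_mult
     | apply cp_cst | apply (cp_clamp _ _ _ Hay) | apply Hcu | apply Hcu1].

Theorem lemma2p11 (n : nat) (b : Rbar) (u u1 u2 : R -> R) :
  (2 <= n)%nat ->
  Rbar_lt 0 b ->
  (forall x, in_Ico0 b x -> 0 < u x) ->
  deriv_on_Ico0 b u u1 ->
  deriv_on_Ico0 b u1 u2 ->
  (forall x, in_Ico0 b x ->
     u2 x / (1 + (u1 x) ^ 2) = x * u1 x / 2 - u x / 2 + (INR n - 1) / u x) ->
  u 0 < sqrt (2 * (INR n - 1)) ->
  u1 0 < 0 ->
  strictly_convex_on (in_Ico0 b) u.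
Proof.
  intros Hn Hb Hu Hd1 Hd2 Hode Hu0 Hp0.
  set (c := INR n - 1) in *.
  assert (Hc : 1 <= c).
  { unfold c. apply le_INR in Hn. replace (INR 2) with 2 in Hn by (simpl; ring). lra. }
  assert (H0in : in_Ico0 b 0) by (split; [lra | exact Hb]).
  assert (Hu2 : forall x, in_Ico0 b x -> u2 x = (1 + u1 x ^ 2) * (c - Qf u u1 x / 2) / u x).
  { intros x Hx. pose proof (Hu x Hx). pose proof (pow2_ge_0 (u1 x)).
    replace (u2 x) with (u2 x / (1 + u1 x ^ 2) * (1 + u1 x ^ 2)) by (field; lra).
    rewrite (Hode x Hx). unfold Qf. field. lra. }
  assert (dU : forall x, 0 < x -> Rbar_lt x b -> is_derive u x (u1 x)).
  { intros; apply is_derive_Reals; eapply deriv_interior; eauto. }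
  assert (dU1 : forall x, 0 < x -> Rbar_lt x b -> is_derive u1 x (u2 x)).
  { intros; apply is_derive_Reals; eapply deriv_interior; eauto. }
  assert (dQ : forall x, 0 < x -> Rbar_lt x b -> derivable_pt_lim (Qf u u1) x (Wf c u u1 x)).
  { intros x Hx Hxb. apply is_derive_Reals. pose proof (dU x Hx Hxb) as H1. pose proof (dU1 x Hx Hxb) as H2.
    assert (Hin : in_Ico0 b x) by (split; [lra|exact Hxb]).
    pose proof (Hu x Hin).
    unfold Qf. auto_derive.
    - repeat split; first [exists (u1 x); exact H1 | exists (u2 x); exact H2].
    - replace (Derive (fun x0 : R => u x0) x) with (u1 x) by (symmetry; apply is_derive_unique; exact H1); replace (Derive (fun x0 : R => u1 x0) x) with (u2 x) by (symmetry; apply is_derive_unique; exact H2).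
      rewrite (Hu2 x Hin). unfold Wf, Qf. field. lra. }
  assert (dW : forall x, 0 < x -> Rbar_lt x b -> derivable_pt_lim (Wf c u u1) x
     (u x * u2 x - (1 + u1 x ^ 2) * (c - Qf u u1 x / 2) - 2 * x * u1 x * u2 x * (1 + (c - Qf u u1 x / 2))
      + x * (1 + u1 x ^ 2) * (u x * u1 x - x * u1 x ^ 2 - x * u x * u2 x) / 2)).
  { intros x Hx Hxb. apply is_derive_Reals. pose proof (dU x Hx Hxb) as H1. pose proof (dU1 x Hx Hxb) as H2.
    unfold Wf, Qf. auto_derive.
    - repeat split; first [exists (u1 x); exact H1 | exists (u2 x); exact H2].
    - replace (Derive (fun x0 : R => u x0) x) with (u1 x) by (symmetry; apply is_derive_unique; exact H1); replace (Derive (fun x0 : R => u1 x0) x) with (u2 x) by (symmetry; apply is_derive_unique; exact H2). field. }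
  assert (contQ : forall a y, 0 <= a -> a <= y -> Rbar_lt y b -> forall x,
     continuity_pt (fun s => Qf u u1 (clamp a y s)) x).
  { intros a y Ha Hay Hyb x.
    pose proof (cont_clamp b u u1 a y Hd1 Ha Hay Hyb) as Hcu.
    pose proof (cont_clamp b u1 u2 a y Hd2 Ha Hay Hyb) as Hcu1.
    contt Hcu Hcu1 Hay. }
  assert (contW : forall a y, 0 <= a -> a <= y -> Rbar_lt y b -> forall x,
     continuity_pt (fun s => Wf c u u1 (clamp a y s)) x).
  { intros a y Ha Hay Hyb x.
    pose proof (cont_clamp b u u1 a y Hd1 Ha Hay Hyb) as Hcu.
    pose proof (cont_clamp b u1 u2 a y Hd2 Ha Hay Hyb) as Hcu1.
    contt Hcu Hcu1 Hay. }
  assert (Hu00 : 0 < u 0) by (apply Hu; exact H0in).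
  assert (HQ0 : Qf u u1 0 < 2 * c).
  { unfold Qf. pose proof (sqrt_sqrt (2 * c) ltac:(lra)). pose proof (sqrt_pos (2 * c)). nra. }
  assert (Wneg : forall y, in_Ico0 b y -> Wf c u u1 y < 0).
  { intros y [Hy0 Hyb]. destruct (Rlt_le_dec (Wf c u u1 y) 0) as [L|Hge]; [exact L|]. exfalso.
    assert (W0 : Wf c u u1 0 < 0) by (unfold Wf, Qf; nra).
    assert (Hy : 0 < y) by (destruct (Req_dec y 0) as [E|E]; [subst; lra | lra]).
    destruct (first_zero (Wf c u u1) y Hy W0 Hge (contW 0 y ltac:(lra) ltac:(lra) Hyb))
      as [z [[Hz Hzy] [Wz Hbef]]].
    assert (Hzb : Rbar_lt z b) by (apply (rbar_lt_le b z y); auto).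
    assert (Hzin : in_Ico0 b z) by (split; [lra|exact Hzb]).
    destruct (mvt_open (Qf u u1) (Wf c u u1) 0 z Hz
      (fun x Hx => dQ x (proj1 Hx) (rbar_lt_le b x z (Rlt_le _ _ (proj2 Hx)) Hzb))
      (contQ 0 z ltac:(lra) ltac:(lra) Hzb)) as [c1 [Hc1 Ec1]].
    pose proof (Hbef c1 ltac:(lra)).
    assert (HQz : Qf u u1 z < 2 * c) by nra.
    set (D := c - Qf u u1 z / 2) in *.
    assert (HD : 0 < D) by (unfold D; lra).
    pose proof (Hu z Hzin) as Huz.
    pose proof (pow2_ge_0 (u1 z)) as Hp2.
    assert (Hu2z : u z * u2 z = (1 + u1 z ^ 2) * D).
    { rewrite (Hu2 z Hzin). fold D. field. lra. }
    assert (Hu2p : 0 < u2 z).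
    { rewrite (Hu2 z Hzin). fold D. apply Rdiv_lt_0_compat; [nra | lra]. }
    assert (Wz' : u z * u1 z - z * u1 z ^ 2 - z * (1 + u1 z ^ 2) * D = 0) by (unfold Wf in Wz; fold D in Wz; exact Wz).
    assert (Hp : 0 < u1 z).
    { destruct (Rlt_le_dec 0 (u1 z)) as [P|P]; [exact P|]. exfalso.
      assert (0 < z * (1 + u1 z ^ 2) * D) by (apply Rmult_lt_0_compat; [apply Rmult_lt_0_compat|]; lra).
      assert (u1 z * (u z - z * u1 z) <= 0) by nra. nra. }
    pose proof (dW z Hz Hzb) as HdW. fold D in HdW.
    assert (A : z * u z * u2 z = z * ((1 + u1 z ^ 2) * D)) by (rewrite Rmult_assoc, Hu2z; ring).
    rewrite A, Hu2z in HdW.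
    replace (u z * u1 z - z * u1 z ^ 2 - z * ((1 + u1 z ^ 2) * D)) with 0 in HdW by (rewrite <- Wz'; ring).
    apply (neg_deriv_left (Wf c u u1) z (-2 * z * u1 z * u2 z * (1 + D)) Hz).
    - replace (-2 * z * u1 z * u2 z * (1 + D)) with
        ((1 + u1 z ^ 2) * D - (1 + u1 z ^ 2) * D - 2 * z * u1 z * u2 z * (1 + D) + z * (1 + u1 z ^ 2) * 0 / 2) by field.
      exact HdW.
    - assert (0 < z * u1 z * u2 z * (1 + D)) by (repeat apply Rmult_lt_0_compat; lra). lra.
    - intros t Ht. rewrite Wz. apply Hbef. exact Ht. }
  assert (Qlt : forall x, in_Ico0 b x -> Qf u u1 x < 2 * c).
  { intros x [Hx0 Hxb]. destruct (Req_dec x 0) as [E|E]; [subst; exact HQ0|].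
    destruct (mvt_open (Qf u u1) (Wf c u u1) 0 x ltac:(lra)
      (fun y Hy => dQ y (proj1 Hy) (rbar_lt_le b y x (Rlt_le _ _ (proj2 Hy)) Hxb))
      (contQ 0 x ltac:(lra) ltac:(lra) Hxb)) as [c1 [Hc1 Ec1]].
    assert (Wc1 : Wf c u u1 c1 < 0) by (apply Wneg; split; [lra| apply (rbar_lt_le b c1 x); [lra|exact Hxb]]).
    nra. }
  assert (U2pos : forall x, in_Ico0 b x -> 0 < u2 x).
  { intros x Hx. rewrite (Hu2 x Hx). pose proof (Qlt x Hx). pose proof (Hu x Hx).
    pose proof (pow2_ge_0 (u1 x)). apply Rdiv_lt_0_compat; nra. }
  assert (Inc : forall s t, in_Ico0 b s -> in_Ico0 b t -> s < t -> u1 s < u1 t).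
  { intros s t [Hs0 Hsb] [Ht0 Htb] Hst.
    destruct (mvt_open u1 u2 s t Hst
      (fun y Hy => proj1 (is_derive_Reals _ _ _) (dU1 y ltac:(lra) (rbar_lt_le b y t (Rlt_le _ _ (proj2 Hy)) Htb)))
      (cont_clamp b u1 u2 s t Hd2 Hs0 (Rlt_le _ _ Hst) Htb)) as [c1 [Hc1 Ec1]].
    assert (0 < u2 c1) by (apply U2pos; split; [lra| apply (rbar_lt_le b c1 t); [lra|exact Htb]]).
    nra. }
  assert (Core : forall x y t, in_Ico0 b x -> in_Ico0 b y -> x < y -> 0 < t < 1 ->
     u (t * x + (1 - t) * y) < t * u x + (1 - t) * u y).
  { intros x y t [Hx0 Hxb] [Hy0 Hyb] Hxy Ht.
    set (m := t * x + (1 - t) * y).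
    assert (Hm1 : x < m) by (unfold m; nra).
    assert (Hm2 : m < y) by (unfold m; nra).
    assert (Hmb : Rbar_lt m b) by (apply (rbar_lt_le b m y); [lra|exact Hyb]).
    destruct (mvt_open u u1 x m Hm1
      (fun s Hs => proj1 (is_derive_Reals _ _ _) (dU s ltac:(lra) (rbar_lt_le b s m (Rlt_le _ _ (proj2 Hs)) Hmb)))
      (cont_clamp b u u1 x m Hd1 Hx0 (Rlt_le _ _ Hm1) Hmb)) as [c1 [Hc1 E1]].
    destruct (mvt_open u u1 m y Hm2
      (fun s Hs => proj1 (is_derive_Reals _ _ _) (dU s ltac:(lra) (rbar_lt_le b s y (Rlt_le _ _ (proj2 Hs)) Hyb)))
      (cont_clamp b u u1 m y Hd1 ltac:(lra) (Rlt_le _ _ Hm2) Hyb)) as [c2 [Hc2 E2]].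
    assert (Hlt : u1 c1 < u1 c2).
    { apply Inc; try lra.
      split; [lra| apply (rbar_lt_le b c1 y); [lra|exact Hyb]].
      split; [lra| apply (rbar_lt_le b c2 y); [lra|exact Hyb]]. }
    assert (Id : t * u x + (1 - t) * u y - u m = t * (1 - t) * (y - x) * (u1 c2 - u1 c1)).
    { replace (u x) with (u m - u1 c1 * (m - x)) by lra.
      replace (u y) with (u m + u1 c2 * (y - m)) by lra. unfold m; ring. }
    assert (0 < t * (1 - t) * (y - x) * (u1 c2 - u1 c1)) by (repeat apply Rmult_lt_0_compat; lra).
    lra. }
  intros x y t Hx Hy Hxy Ht.
  destruct (Rlt_le_dec x y) as [L|L].
  - apply Core; auto.
  - assert (L' : y < x) by lra.
    replace (t * x + (1 - t) * y) with ((1 - t) * y + (1 - (1 - t)) * x) by ring.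
    replace (t * u x + (1 - t) * u y) with ((1 - t) * u y + (1 - (1 - t)) * u x) by ring.
    apply Core; auto; lra.
Qed.
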